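(* Let $A=(-1,0)$ and $B=(1,0)$. For $x$ on the origin-centered circle of radius $r>1$, let $P^2(x)$ be defined by two steps. First, $y$ is the second intersection point of the line $xA$ with this circle. Then $P^2(x)$ is the second intersection point of the line $yB$ with this circle. Let $Y$ be the vector field on $\mathbb{R}^2\setminus\{0\}$ given in polar coordinates $(\alpha,r)$ by $$Y=-\frac{4\sin\alpha}{r}\,\frac{\partial}{\partial\alpha}.$$ Then, uniformly in $x$ with $|x|=r$, as $r\to\infty$, $$|P^2(x)-x-Y(x)|=O\Big(\frac{1}{r}\Big).$$
   Context: The vector $\partial/\partial\alpha$ at a point at distance $r$ from the origin has Euclidean length $r$. Hence $Y$ is tangent to origin-centered circles and has length $4|\sin\alpha|$. $O(1/r)$ as $r\to\infty$ means bounded in absolute value by $C/r$ for all $r\ge R$, for some constants $C$ and $R$. *)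

(* Defs.v *)
From Stdlib Require Import Reals.
Open Scope R_scope.

Definition pt := (R * R)%type.

Definition padd (p q : pt) : pt := (fst p + fst q, snd p + snd q).
Definition psub (p q : pt) : pt := (fst p - fst q, snd p - snd q).
Definition pscale (c : R) (p : pt) : pt := (c * fst p, c * snd p).
Definition pnorm (p : pt) : R := sqrt (fst p ^ 2 + snd p ^ 2).

Definition ptA : pt := (-1, 0).
Definition ptB : pt := (1, 0).

Definition on_circle (r : R) (q : pt) : Prop := pnorm q = r.

Definition second_intersection (r : R) (p Q q : pt) : Prop :=
  on_circle r q /\ (exists t : R, q = padd p (pscale t (psub Q p))) /\ q <> p.

Definition P2_rel (r : R) (x z : pt) : Prop :=
  exists y : pt, second_intersection r x ptA y /\ second_intersection r y ptB z.

(* The polar coordinate vector d/d alpha at x = (|x| cos a, |x| sin a) is (-x2, x1). *)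
Definition d_alpha (x : pt) : pt := (- snd x, fst x).
Definition sin_alpha (x : pt) : R := snd x / pnorm x.
Definition Yfield (x : pt) : pt :=
  pscale (- (4 * sin_alpha x / pnorm x)) (d_alpha x).

(* Main.v *)
Require Import Defs.
From Stdlib Require Import Reals Lra Psatz.
Open Scope R_scope.

Lemma helper (e n r a v : R) : 0 < r -> 0 < n -> r^4 <= 16*n -> 0 <= a ->
  e * (n*r^2) = v -> - (a*r^5) <= v <= a*r^5 -> - (16*a/r) <= e <= 16*a/r.
Proof.
  intros hr hn h4 ha he [hv1 hv2].
  assert (hnr : 0 < n*r^2) by (apply Rmult_lt_0_compat; [lra| apply pow_lt; lra]).
  assert (ha6 : a*r^6 <= 16*a*(n*r^2)).
  { replace (a*r^6) with (a*r^2*r^4) by ring.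
    replace (16*a*(n*r^2)) with (a*r^2*(16*n)) by ring.
    apply Rmult_le_compat_l; [|lra]. apply Rmult_le_pos; [lra| apply pow_le; lra]. }
  assert (h1 : e*r*(n*r^2) <= 16*a*(n*r^2)).
  { replace (e*r*(n*r^2)) with (v*r) by (rewrite <- he; ring).
    replace (a*r^6) with (a*r^5*r) in ha6 by ring.
    assert (v*r <= a*r^5*r) by (apply Rmult_le_compat_r; lra). lra. }
  assert (h2 : -(16*a)*(n*r^2) <= e*r*(n*r^2)).
  { replace (e*r*(n*r^2)) with (v*r) by (rewrite <- he; ring).
    replace (a*r^6) with (a*r^5*r) in ha6 by ring.
    assert (-(a*r^5)*r <= v*r) by (apply Rmult_le_compat_r; lra). lra. }
  apply Rmult_le_reg_r in h1; [|exact hnr].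
  apply Rmult_le_reg_r in h2; [|exact hnr].
  split.
  - apply (Rmult_le_reg_r r); [lra|]. unfold Rdiv.
    replace (- (16 * a * / r) * r) with (-(16*a)) by (field; lra). lra.
  - apply (Rmult_le_reg_r r); [lra|]. unfold Rdiv.
    replace (16 * a * / r * r) with (16*a) by (field; lra). lra.
Qed.

Theorem corollary4p12 :
  exists C R0 : R,
    forall r : R, 1 < r -> R0 <= r ->
    forall x z : pt, on_circle r x -> P2_rel r x z ->
      pnorm (psub (psub z x) (Yfield x)) <= C / r.
Proof.
  exists 1280, 2.
  intros r _ hr2 [x1 x2] [z1 z2] hx [[y1 y2] [[hy [[t ht] hyx]] [hz [[s hs] hzy]]]].
  unfold on_circle, pnorm in hy, hz.
  assert (hc : x1^2 + x2^2 = r^2).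
  { unfold on_circle, pnorm in hx; simpl in hx. rewrite <- hx. rewrite pow2_sqrt; [ring|nra]. }
  simpl in hy, hz.
  assert (hcy : y1^2 + y2^2 = r^2).
  { rewrite <- hy. rewrite pow2_sqrt; [ring|nra]. }
  assert (hcz : z1^2 + z2^2 = r^2).
  { rewrite <- hz. rewrite pow2_sqrt; [ring|nra]. }
  unfold padd, pscale, psub, ptA, ptB in ht, hs; simpl in ht, hs.
  injection ht as hy1 hy2. injection hs as hz1 hz2.
  assert (ht0 : t <> 0).
  { intro e. apply hyx. subst. f_equal; ring. }
  assert (hs0 : s <> 0).
  { intro e. apply hzy. subst. f_equal; ring. }
  assert (htD : t*(r^2+2*x1+1) = 2*(x1+r^2)).
  { assert (E : t*(t*((1+x1)^2+x2^2) - 2*(x1+(x1^2+x2^2))) = (y1^2+y2^2) - (x1^2+x2^2))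
      by (rewrite hy1, hy2; ring).
    rewrite hcy, hc in E.
    replace ((1+x1)^2+x2^2) with (1+2*x1+(x1^2+x2^2)) in E by ring.
    rewrite hc in E.
    replace (r^2-r^2) with 0 in E by ring.
    apply Rmult_integral in E. destruct E as [E|E]; [contradiction|lra]. }
  assert (hy1D : y1*(r^2+2*x1+1) = -(x1*(r^2+1)+2*r^2)).
  { replace (y1*(r^2+2*x1+1)) with (x1*(r^2+2*x1+1) + (-1-x1)*(t*(r^2+2*x1+1)))
      by (rewrite hy1; ring).
    rewrite htD; ring. }
  assert (hy2D : y2*(r^2+2*x1+1) = x2*(1-r^2)).
  { replace (y2*(r^2+2*x1+1)) with (x2*(r^2+2*x1+1) - x2*(t*(r^2+2*x1+1)))
      by (rewrite hy2; ring).
    rewrite htD; ring. }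
  assert (hsD : s*(r^2-2*y1+1) = 2*(r^2-y1)).
  { assert (E : s*(s*((1-y1)^2+y2^2) - 2*(-y1+(y1^2+y2^2))) = (z1^2+z2^2) - (y1^2+y2^2))
      by (rewrite hz1, hz2; ring).
    rewrite hcz, hcy in E.
    replace ((1-y1)^2+y2^2) with (1-2*y1+(y1^2+y2^2)) in E by ring.
    rewrite hcy in E.
    replace (r^2-r^2) with 0 in E by ring.
    apply Rmult_integral in E. destruct E as [E|E]; [contradiction|lra]. }
  assert (hz1D : z1*(r^2-2*y1+1) = -y1*(r^2+1)+2*r^2).
  { replace (z1*(r^2-2*y1+1)) with (y1*(r^2-2*y1+1) + (1-y1)*(s*(r^2-2*y1+1)))
      by (rewrite hz1; ring).
    rewrite hsD; ring. }
  assert (hz2D : z2*(r^2-2*y1+1) = y2*(1-r^2)).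
  { replace (z2*(r^2-2*y1+1)) with (y2*(r^2-2*y1+1) - y2*(s*(r^2-2*y1+1)))
      by (rewrite hz2; ring).
    rewrite hsD; ring. }
  set (N := (r^2+1)^2 + 4*x1*(r^2+1) + 4*r^2).
  assert (hN : (r^2+2*x1+1)*(r^2-2*y1+1) = N).
  { replace ((r^2+2*x1+1)*(r^2-2*y1+1)) with
      ((r^2+2*x1+1)*(r^2+1) - 2*(y1*(r^2+2*x1+1))) by ring.
    rewrite hy1D. unfold N; ring. }
  assert (hz1N : z1*N = x1*(r^2+1)^2 + 4*r^2*(r^2+1) + 4*r^2*x1).
  { rewrite <- hN.
    replace (z1*((r^2+2*x1+1)*(r^2-2*y1+1))) with
      ((z1*(r^2-2*y1+1))*(r^2+2*x1+1)) by ring.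
    rewrite hz1D.
    replace ((-y1*(r^2+1)+2*r^2)*(r^2+2*x1+1)) with
      (-(r^2+1)*(y1*(r^2+2*x1+1)) + 2*r^2*(r^2+2*x1+1)) by ring.
    rewrite hy1D; ring. }
  assert (hz2N : z2*N = x2*(r^2-1)^2).
  { rewrite <- hN.
    replace (z2*((r^2+2*x1+1)*(r^2-2*y1+1))) with
      ((z2*(r^2-2*y1+1))*(r^2+2*x1+1)) by ring.
    rewrite hz2D.
    replace (y2*(1-r^2)*(r^2+2*x1+1)) with ((1-r^2)*(y2*(r^2+2*x1+1))) by ring.
    rewrite hy2D; ring. }
  clear - hc hz1N hz2N hr2 hx.
  assert (hr : 0 < r) by lra.
  assert (hx1 : -r <= x1 <= r) by (split; nra).
  assert (hx2 : -r <= x2 <= r) by (split; nra).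
  assert (hN4 : r^4 <= 16*N).
  { assert (N - (r^2+1-2*r)^2 = 4*(r^2+1)*(x1+r)) by (unfold N; ring).
    assert (0 <= 4*(r^2+1)*(x1+r)) by (apply Rmult_le_pos; nra).
    assert (r <= 2*(r-1)) by lra.
    assert (r^2 <= (2*(r-1))^2) by nra.
    assert (r^4 <= (2*(r-1))^4) by nra.
    replace (r^2+1-2*r) with ((r-1)^2) in * by ring.
    nra. }
  assert (hNpos : 0 < N).
  { assert (0 < r^4) by (apply pow_lt; lra). lra. }
  unfold Yfield, sin_alpha. rewrite hx.
  unfold pnorm, psub, pscale, d_alpha; simpl.
  set (E1 := z1 - x1 - - (4 * (x2 / r) / r) * - x2).
  set (E2 := z2 - x2 - - (4 * (x2 / r) / r) * x1).
  set (m1 := -4*x2^2*((r^2+1) + 4*x1*(r^2+1) + 4*r^2)).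
  set (m2 := x2*(-8*r^4 + 4*x1*(r^2+1) + 16*x1^2*(r^2+1) + 16*x1*r^2)).
  assert (hE1 : E1*(N*r^2) = m1).
  { assert (H : E1*(N*r^2) = (z1*N)*r^2 - x1*N*r^2 - 4*x2^2*N) by (unfold E1; field; lra).
    rewrite H, hz1N. unfold m1, N.
    replace (x2^2) with (r^2 - x1^2) by lra. ring. }
  assert (hE2 : E2*(N*r^2) = m2).
  { assert (H : E2*(N*r^2) = (z2*N)*r^2 - x2*N*r^2 + 4*x1*x2*N) by (unfold E2; field; lra).
    rewrite H, hz2N. unfold m2, N. ring. }
  assert (hq : r^2+1 <= 2*r^2) by nra.
  assert (hm1 : -(40*r^5) <= m1 <= 40*r^5).
  { assert (hu : -(8*r^3) <= (r^2+1) + 4*x1*(r^2+1) + 4*r^2 <= 8*r^3).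
    { assert (-r*(r^2+1) <= x1*(r^2+1) <= r*(r^2+1)) by (split; nra).
      split; nra. }
    assert (0 <= x2^2 <= r^2) by (split; nra).
    unfold m1. split; nra. }
  assert (hm2 : -(40*r^5) <= m2 <= 40*r^5).
  { set (w := -8*r^4 + 4*x1*(r^2+1) + 16*x1^2*(r^2+1) + 16*x1*r^2).
    assert (hw : -(40*r^4) <= w <= 40*r^4).
    { assert (-r*(r^2+1) <= x1*(r^2+1) <= r*(r^2+1)) by (split; nra).
      assert (0 <= x1^2*(r^2+1) <= r^2*(r^2+1)) by (split; nra).
      assert (-r^3 <= x1*r^2 <= r^3) by (split; nra).
      unfold w; split; nra. }
    unfold m2; fold w. split; nra. }
  destruct (helper E1 N r 40 m1 hr hNpos hN4 ltac:(lra) hE1 hm1) as [a1 a2].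
  destruct (helper E2 N r 40 m2 hr hNpos hN4 ltac:(lra) hE2 hm2) as [b1 b2].
  set (b := 16*40/r) in *.
  assert (hb : 0 <= b) by (unfold b; apply Rle_mult_inv_pos; lra).
  replace (1280 / r) with (2*b) by (unfold b; field; lra).
  rewrite <- (sqrt_pow2 (2*b)) by lra.
  apply sqrt_le_1_alt. nra.
Qed.
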